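(* Let $0\le a\le b\le1$, and in $l_\infty^2$ let $H_1=\{(\xi_1,\xi_2):\xi_2\ge -a\xi_1\}$ and $H_2=\{(\xi_1,\xi_2):\xi_2\le b\xi_1\}$ with the restricted metrics. Let $X$ be the gluing of $H_1$ and $H_2$ along $\mathbb{R}$ via the isometries $\xi\mapsto(\xi,-a\xi)\in H_1$ and $\xi\mapsto(\xi,b\xi)\in H_2$ (i.e. identifying $(\xi,-a\xi)$ with $(\xi,b\xi)$). Then $X$ is hyperconvex if and only if $a=b=0$ or $a=b=1$.
   Context: $l_\infty^2$ is $\mathbb{R}^2$ with the metric $d((\xi_1,\xi_2),(\eta_1,\eta_2))=\max(|\xi_1-\eta_1|,|\xi_2-\eta_2|)$. A metric space is hyperconvex if every collection of closed balls $\{B(x_i,r_i)\}$ with $d(x_i,x_j)\le r_i+r_j$ has non-empty intersection. The gluing of $X_1,X_2$ along $A$ via isometric embeddings $\varphi_k\colon A\to X_k$ with closed images is $X_1\sqcup X_2/(\varphi_1(a)\sim\varphi_2(a))$ with metric $d_k$ on $X_k$ and $d(x,y)=\inf_{a\in A}\{d_1(x,\varphi_1(a))+d_2(\varphi_2(a),y)\}$ for $x\in X_1,y\in X_2$. *)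

(* Defs.v *)
From Stdlib Require Import Reals Lra ClassicalEpsilon.
Open Scope R_scope.

Definition dinf (p q : R * R) : R :=
  Rmax (Rabs (fst p - fst q)) (Rabs (snd p - snd q)).

(* Infimum of a set of reals (chosen classically; value 0 if none exists). *)
Definition is_inf (E : R -> Prop) (m : R) : Prop :=
  (forall x, E x -> m <= x) /\
  (forall m', (forall x, E x -> m' <= x) -> m' <= m).

Definition Rinf (E : R -> Prop) : R := epsilon (inhabits 0) (is_inf E).

Definition Hyperconvex (T : Type) (d : T -> T -> R) : Prop :=
  forall (I : Type) (x : I -> T) (r : I -> R),
    (forall i j, d (x i) (x j) <= r i + r j) ->
    exists z : T, forall i, d (x i) z <= r i.

(* Generic gluing of (X1,d1) and (X2,d2) along A via phi1, phi2, as a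
   pseudometric on the disjoint union X1 + X2.  The glued metric space is the
   metric quotient of this pseudometric (identified points, phi1 a ~ phi2 a,
   are exactly the pairs at distance 0). *)
Definition glue_dist {X1 X2 A : Type} (d1 : X1 -> X1 -> R) (d2 : X2 -> X2 -> R)
  (phi1 : A -> X1) (phi2 : A -> X2) (x y : X1 + X2) : R :=
  match x, y with
  | inl x1, inl y1 => d1 x1 y1
  | inr x2, inr y2 => d2 x2 y2
  | inl x1, inr y2 =>
      Rinf (fun t => exists a : A, t = d1 x1 (phi1 a) + d2 (phi2 a) y2)
  | inr x2, inl y1 =>
      Rinf (fun t => exists a : A, t = d1 y1 (phi1 a) + d2 (phi2 a) x2)
  end.

Definition H1 (a : R) : Type := { p : R * R | snd p >= - a * fst p }.
Definition H2 (b : R) : Type := { p : R * R | snd p <= b * fst p }.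

Definition dH1 (a : R) (p q : H1 a) : R := dinf (proj1_sig p) (proj1_sig q).
Definition dH2 (b : R) (p q : H2 b) : R := dinf (proj1_sig p) (proj1_sig q).

Definition phi1 (a : R) (xi : R) : H1 a :=
  exist _ (xi, - a * xi) (Rge_refl (- a * xi)).
Definition phi2 (b : R) (xi : R) : H2 b :=
  exist _ (xi, b * xi) (Rle_refl (b * xi)).

Definition Xcar (a b : R) : Type := (H1 a + H2 b)%type.
Definition dX (a b : R) : Xcar a b -> Xcar a b -> R :=
  glue_dist (dH1 a) (dH2 b) (phi1 a) (phi2 b).

(* Main.v *)
Require Import Defs.
From Stdlib Require Import Reals Lra Psatz ClassicalEpsilon Classical.
Open Scope R_scope.

Lemma abs_ge1 x : x <= Rabs x. Proof. apply Rle_abs. Qed.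
Lemma abs_ge2 x : - x <= Rabs x. Proof. rewrite <- Rabs_Ropp. apply Rle_abs. Qed.

Lemma dinf_ge1 p q : Rabs (fst p - fst q) <= dinf p q. Proof. apply Rmax_l. Qed.
Lemma dinf_ge2 p q : Rabs (snd p - snd q) <= dinf p q. Proof. apply Rmax_r. Qed.
Lemma dinf_nonneg p q : 0 <= dinf p q.
Proof. eapply Rle_trans; [apply Rabs_pos|apply dinf_ge1]. Qed.
Lemma dinf_le p q m : -m <= fst p - fst q <= m -> -m <= snd p - snd q <= m -> dinf p q <= m.
Proof. intros H1 H2. apply Rmax_lub; apply Rabs_le; auto. Qed.
Lemma dinf_sym p q : dinf p q = dinf q p.
Proof. unfold dinf. rewrite (Rabs_minus_sym (fst p)), (Rabs_minus_sym (snd p)). reflexivity. Qed.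
Lemma dinf_tri p q r : dinf p r <= dinf p q + dinf q r.
Proof.
  apply Rmax_lub.
  - eapply Rle_trans; [|apply Rplus_le_compat; apply dinf_ge1].
    replace (fst p - fst r) with ((fst p - fst q) + (fst q - fst r)) by ring. apply Rabs_triang.
  - eapply Rle_trans; [|apply Rplus_le_compat; apply dinf_ge2].
    replace (snd p - snd r) with ((snd p - snd q) + (snd q - snd r)) by ring. apply Rabs_triang.
Qed.

Lemma inf_exists (E : R -> Prop) : (exists x, E x) -> (forall x, E x -> 0 <= x) -> exists m, is_inf E m.
Proof.
  intros [x0 Hx0] Hpos.
  destruct (completeness (fun y => E (- y))) as [m [Hub Hlub]].
  - exists 0. intros y Hy. specialize (Hpos _ Hy). lra.
  - exists (- x0). rewrite Ropp_involutive. exact Hx0.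
  - exists (- m). split.
    + intros x Hx. assert (- x <= m). { apply Hub. rewrite Ropp_involutive. exact Hx. } lra.
    + intros m' Hm'. assert (m <= - m'). { apply Hlub. intros y Hy. specialize (Hm' _ Hy). lra. } lra.
Qed.

Lemma Rinf_spec (E : R -> Prop) : (exists x, E x) -> (forall x, E x -> 0 <= x) -> is_inf E (Rinf E).
Proof. intros H1 H2. unfold Rinf. apply epsilon_spec. apply inf_exists; auto. Qed.

Definition crossset a b (p q : R * R) : R -> Prop :=
  fun t => exists xi, t = dinf p (xi, - a * xi) + dinf (xi, b * xi) q.

Lemma dX_cross a b (p : H1 a) (q : H2 b) :
  dX a b (inl p) (inr q) = Rinf (crossset a b (proj1_sig p) (proj1_sig q)).
Proof. reflexivity. Qed.
Lemma dX_cross' a b (p : H1 a) (q : H2 b) :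
  dX a b (inr q) (inl p) = Rinf (crossset a b (proj1_sig p) (proj1_sig q)).
Proof. reflexivity. Qed.

Lemma crossset_spec a b p q : is_inf (crossset a b p q) (Rinf (crossset a b p q)).
Proof.
  apply Rinf_spec.
  - exists (dinf p (0, -a*0) + dinf (0, b*0) q). exists 0. reflexivity.
  - intros x [xi ->]. pose proof (dinf_nonneg p (xi, -a*xi)). pose proof (dinf_nonneg (xi, b*xi) q). lra.
Qed.

Lemma cross_le a b p q xi : Rinf (crossset a b p q) <= dinf p (xi, - a * xi) + dinf (xi, b * xi) q.
Proof. destruct (crossset_spec a b p q) as [H _]. apply H. exists xi. reflexivity. Qed.

Lemma cross_ge a b p q m : (forall xi, m <= dinf p (xi, - a * xi) + dinf (xi, b * xi) q) ->
  m <= Rinf (crossset a b p q).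
Proof. intros H. destruct (crossset_spec a b p q) as [_ H2]. apply H2. intros x [xi ->]. apply H. Qed.

Lemma hc_plane : Hyperconvex (R * R) dinf.
Proof.
  intros I x r H.
  destruct (classic (inhabited I)) as [[i0]|nI].
  2:{ exists (0,0). intros i. exfalso. apply nI. constructor. exact i. }
  assert (Hc1 : forall i j, fst (x i) - r i <= fst (x j) + r j).
  { intros i j. pose proof (H i j). pose proof (dinf_ge1 (x i) (x j)). pose proof (abs_ge1 (fst (x i) - fst (x j))). lra. }
  assert (Hc2 : forall i j, snd (x i) - r i <= snd (x j) + r j).
  { intros i j. pose proof (H i j). pose proof (dinf_ge2 (x i) (x j)). pose proof (abs_ge1 (snd (x i) - snd (x j))). lra. }
  destruct (completeness (fun t => exists i, t = fst (x i) - r i)) as [m1 [U1 L1]].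
  { exists (fst (x i0) + r i0). intros t [i ->]. apply Hc1. }
  { exists (fst (x i0) - r i0). exists i0. reflexivity. }
  destruct (completeness (fun t => exists i, t = snd (x i) - r i)) as [m2 [U2 L2]].
  { exists (snd (x i0) + r i0). intros t [i ->]. apply Hc2. }
  { exists (snd (x i0) - r i0). exists i0. reflexivity. }
  exists (m1, m2). intros i. apply dinf_le; simpl.
  - assert (fst (x i) - r i <= m1) by (apply U1; exists i; reflexivity).
    assert (m1 <= fst (x i) + r i) by (apply L1; intros t [j ->]; apply Hc1). lra.
  - assert (snd (x i) - r i <= m2) by (apply U2; exists i; reflexivity).
    assert (m2 <= snd (x i) + r i) by (apply L2; intros t [j ->]; apply Hc2). lra.
Qed.

Lemma hc_transfer (X Y : Type) (dx : X -> X -> R) (dy : Y -> Y -> R) (f : X -> Y) :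
  (forall u v, dy (f u) (f v) = dx u v) -> (forall y, exists u, f u = y) ->
  Hyperconvex Y dy -> Hyperconvex X dx.
Proof.
  intros Hiso Hsurj HY I x r H.
  destruct (HY I (fun i => f (x i)) r) as [w Hw].
  { intros i j. rewrite Hiso. apply H. }
  destruct (Hsurj w) as [z Hz]. exists z. intros i. rewrite <- Hiso, Hz. apply Hw.
Qed.

Lemma glue_hc a b (g : R * R -> R * R)
  (giso : forall p q, dinf (g p) (g q) = dinf p q)
  (gline : forall xi, g (xi, b * xi) = (xi, - a * xi))
  (gwit : forall p q, snd p >= - a * fst p -> snd q <= b * fst q ->
     exists xi, dinf p (xi, - a * xi) + dinf (xi, b * xi) q <= dinf p (g q))
  (gsurj : forall w, snd w < - a * fst w -> exists q, snd q <= b * fst q /\ g q = w) :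
  Hyperconvex (Xcar a b) (dX a b).
Proof.
  apply (hc_transfer _ _ _ dinf (fun u => match u with inl p => proj1_sig p | inr q => g (proj1_sig q) end)).
  - assert (Hc : forall (p : H1 a) (q : H2 b), dinf (proj1_sig p) (g (proj1_sig q)) = dX a b (inl p) (inr q)).
    { intros [p hp] [q hq]. rewrite dX_cross. simpl. apply Rle_antisym.
      - apply cross_ge. intros xi. rewrite <- (giso (xi, b*xi) q), gline. apply dinf_tri.
      - destruct (gwit p q hp hq) as [xi Hxi]. eapply Rle_trans; [apply cross_le|exact Hxi]. }
    intros [p|q] [p'|q'].
    + reflexivity.
    + apply Hc.
    + rewrite dinf_sym, Hc. reflexivity.
    + rewrite giso. reflexivity.
  - intros w. destruct (Rlt_or_le (snd w) (- a * fst w)) as [Hl|Hl].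
    + destruct (gsurj w Hl) as [q [hq Hq]]. exists (inr (exist _ q hq)). exact Hq.
    + exists (inl (exist (fun p : R * R => snd p >= - a * fst p) w (Rle_ge _ _ Hl))). reflexivity.
  - apply hc_plane.
Qed.

Ltac kill_abs := repeat match goal with
 | |- context [Rabs ?x] => let H := fresh in destruct (Rle_or_lt 0 x) as [H|H];
     [rewrite (Rabs_right x) by lra | rewrite (Rabs_left x) by lra] end.
Ltac kill_max := repeat match goal with
 | |- context [Rmax ?x ?y] => let H := fresh in destruct (Rle_or_lt x y) as [H|H];
     [rewrite (Rmax_right x y) by lra | rewrite (Rmax_left x y) by lra] end.

Lemma hc00 : Hyperconvex (Xcar 0 0) (dX 0 0).
Proof.
  apply (glue_hc 0 0 (fun p => p)).
  - reflexivity.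
  - intros xi. f_equal. ring.
  - intros [p1 p2] [q1 q2]; simpl; intros hp hq.
    destruct (Rle_or_lt (p1+p2) (q1+q2)); destruct (Rle_or_lt (p1-p2) (q1-q2));
    [ destruct (Rle_or_lt (p1+p2) (p1-p2)) | destruct (Rle_or_lt (p1+p2) (q1-q2))
    | destruct (Rle_or_lt (q1+q2) (p1-p2)) | destruct (Rle_or_lt (q1+q2) (q1-q2)) ];
    match goal with
    | |- _ => exists (p1 - p2); unfold dinf; simpl; kill_abs; kill_max; lra
    | |- _ => exists (p1 + p2); unfold dinf; simpl; kill_abs; kill_max; lra
    | |- _ => exists (q1 - q2); unfold dinf; simpl; kill_abs; kill_max; lra
    | |- _ => exists (q1 + q2); unfold dinf; simpl; kill_abs; kill_max; lra
    end.
  - intros w Hw. exists w. split; [lra|reflexivity].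
Qed.

Lemma hc11 : Hyperconvex (Xcar 1 1) (dX 1 1).
Proof.
  apply (glue_hc 1 1 (fun p => (snd p, - fst p))).
  - intros [p1 p2] [q1 q2]. unfold dinf; simpl.
    replace (- p1 - - q1) with (- (p1 - q1)) by ring. rewrite Rabs_Ropp. apply Rmax_comm.
  - intros xi. simpl. f_equal; ring.
  - intros [p1 p2] [q1 q2]; simpl; intros hp hq.
    exists ((p1 - p2)/2). unfold dinf; simpl. kill_abs; kill_max; lra.
  - intros [w1 w2] Hw. simpl in Hw. exists (- w2, w1). simpl. split; [lra|]. f_equal; ring.
Qed.

Inductive idx3 : Type := J1 | J2 | J3.

Lemma not_hc a b (ha : 0 <= a) (hab : a <= b) (hb : b <= 1) (ha1 : a < 1) (hb0 : 0 < b) :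
  ~ Hyperconvex (Xcar a b) (dX a b).
Proof.
  intros Hhc.
  pose (K := 2*(1+b)*(1-a)). pose (c := (1-a)*(2+b-a)). pose (R0 := 4*(1+b)).
  assert (HP : K >= - a * 0) by (unfold K; nra).
  assert (HP' : - K <= b * 0) by (unfold K; nra).
  assert (HQ : 0 <= b * R0) by (unfold R0; nra).
  pose (P := exist (fun p : R * R => snd p >= - a * fst p) (0, K) HP).
  pose (P' := exist (fun p : R * R => snd p <= b * fst p) (0, - K) HP').
  pose (Q := exist (fun p : R * R => snd p <= b * fst p) (R0, 0) HQ).
  pose (x := fun i => match i with J1 => @inl (H1 a) (H2 b) P | J2 => inr P' | J3 => inr Q end).
  pose (r := fun i => match i with J1 => c | J2 => c | J3 => R0 - c end).
  assert (Hc0 : 0 <= c) by (unfold c; nra).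
  assert (HcR : c <= R0) by (unfold c, R0; nra).
  assert (HKR : K <= R0) by (unfold K, R0; nra).
  assert (HK0 : 0 <= K) by (unfold K; nra).
  assert (HPP : Rinf (crossset a b (0, K) (0, - K)) <= c + c).
  { eapply Rle_trans. apply (cross_le _ _ _ _ (-2*(1-a))).
    assert (dinf (0, K) (-2*(1-a), - a * (-2*(1-a))) <= 2*(1-a)*(1+b-a)).
    { apply dinf_le; simpl; unfold K; nra. }
    assert (dinf (-2*(1-a), b * (-2*(1-a))) (0, -K) <= 2*(1-a)).
    { apply dinf_le; simpl; unfold K; nra. }
    unfold c. lra. }
  assert (HPQ : Rinf (crossset a b (0, K) (R0, 0)) <= c + (R0 - c)).
  { eapply Rle_trans. apply (cross_le _ _ _ _ (2*(1+b))).
    assert (dinf (0, K) (2*(1+b), - a * (2*(1+b))) <= 2*(1+b)).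
    { apply dinf_le; simpl; unfold K; nra. }
    assert (dinf (2*(1+b), b * (2*(1+b))) (R0, 0) <= 2*(1+b)).
    { apply dinf_le; simpl; unfold R0; nra. }
    unfold R0 in *. lra. }
  destruct (Hhc idx3 x r) as [z Hz].
  { intros [] []; simpl; unfold r, x;
      try (rewrite dX_cross || rewrite dX_cross'); simpl; try assumption;
      try (apply dinf_le; simpl; lra).
    all: change (Rinf (crossset a b (0,K) (R0,0)) <= R0 - c + c); lra. }
  pose proof (Hz J3) as Z3.
  destruct z as [[[z1 z2] hz]|[[z1 z2] hz]].
  - pose proof (Hz J2) as Z2.
    change (Rinf (crossset a b (z1,z2) (R0,0)) <= R0 - c) in Z3.
    change (Rinf (crossset a b (z1,z2) (0,-K)) <= c) in Z2.
    assert (Hz1 : R0 - z1 <= Rinf (crossset a b (z1, z2) (R0, 0))).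
    { apply cross_ge. intros xi.
      pose proof (dinf_ge1 (z1,z2) (xi, -a*xi)). pose proof (dinf_ge1 (xi, b*xi) (R0,0)).
      simpl in *. pose proof (abs_ge2 (z1 - xi)). pose proof (abs_ge2 (xi - R0)). lra. }
    assert (Hz2 : K + b * z1 <= Rinf (crossset a b (z1, z2) (0, - K))).
    { apply cross_ge. intros xi.
      pose proof (dinf_ge1 (z1,z2) (xi, -a*xi)). pose proof (dinf_ge2 (xi, b*xi) (0,-K)).
      simpl in *. pose proof (abs_ge1 (b * xi - - K)). pose proof (abs_ge1 (z1 - xi)).
      pose proof (abs_ge2 (z1 - xi)). pose proof (Rabs_pos (z1 - xi)).
      destruct (Rle_or_lt xi z1).
      - assert (0 <= (1 - b) * (z1 - xi)) by (apply Rmult_le_pos; lra). nra.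
      - assert (0 <= b * (xi - z1)) by (apply Rmult_le_pos; lra). nra. }
    assert (c <= z1) by lra.
    assert (0 <= b * (z1 - c)) by (apply Rmult_le_pos; lra).
    assert (0 < (1-a) * (3*b + a*(1-b) + b*b)) by (apply Rmult_lt_0_compat; nra).
    assert (K + b * c > c) by (unfold K, c; nra).
    nra.
  - pose proof (Hz J1) as Z1.
    change (dinf (R0,0) (z1,z2) <= R0 - c) in Z3.
    change (Rinf (crossset a b (0,K) (z1,z2)) <= c) in Z1.
    assert (Hz1 : c <= z1).
    { pose proof (dinf_ge1 (R0, 0) (z1, z2)). simpl in *. pose proof (abs_ge1 (R0 - z1)). lra. }
    assert (Hz2 : K + a * z1 <= Rinf (crossset a b (0, K) (z1, z2))).
    { apply cross_ge. intros xi.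
      pose proof (dinf_ge2 (0,K) (xi, -a*xi)). pose proof (dinf_ge1 (xi, b*xi) (z1,z2)).
      simpl in *. pose proof (abs_ge1 (K - - a * xi)). pose proof (abs_ge1 (xi - z1)).
      pose proof (abs_ge2 (xi - z1)).
      destruct (Rle_or_lt xi z1).
      - assert (0 <= (1 - a) * (z1 - xi)) by (apply Rmult_le_pos; lra). nra.
      - assert (0 <= (1 + a) * (xi - z1)) by (apply Rmult_le_pos; lra). nra. }
    assert (0 <= a * (z1 - c)) by (apply Rmult_le_pos; lra).
    assert (0 < (1-a) * (b + a*(3+b-a))) by (apply Rmult_lt_0_compat; nra).
    assert (K + a * c > c) by (unfold K, c; nra).
    nra.
Qed.

Theorem mainTheorem18 (a b : R) (ha : 0 <= a) (hab : a <= b) (hb : b <= 1) :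
  Hyperconvex (Xcar a b) (dX a b) <-> ((a = 0 /\ b = 0) \/ (a = 1 /\ b = 1)).
Proof.
  split.
  - intros Hhc.
    destruct (Req_dec b 0) as [Hb0|Hb0]; [left; lra|].
    destruct (Req_dec a 1) as [Ha1|Ha1]; [right; lra|].
    exfalso. apply (not_hc a b); auto; lra.
  - intros [[-> ->]|[-> ->]]; [apply hc00|apply hc11].
Qed.
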